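(* For every integer $d\ge 1$, the $d$-dimensional hypercube $Q_d$ is $\mathbb{Z}_{2^d}$-distance antimagic if and only if $d$ is odd.
   Context: $Q_d$ is the graph whose vertices are the binary strings of length $d$, two being adjacent iff they differ in exactly one position. $\mathbb{Z}_m$ is the cyclic group of integers modulo $m$. For a graph $G$ with $n$ vertices and an Abelian group $A$ of order $n$ (written additively), and a bijection $f:V(G)\to A$, the weight of $x$ is $w_f(x)=\sum_{y\in N(x)} f(y)$ computed in $A$ ($N(x)$ the open neighbourhood). $f$ is an $A$-distance antimagic labelling if all weights are pairwise distinct; $G$ is $A$-distance antimagic if it admits such a labelling. *)

(* Defs.v *)
From HB Require Import structures.
From mathcomp Require Import all_boot all_order all_algebra.
Set Implicit Arguments. Unset Strict Implicit. Unset Printing Implicit Defensive.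
Import GRing.Theory.
Local Open Scope ring_scope.

Definition cube_vertex (d : nat) := {ffun 'I_d -> bool}.

Definition cube_adj (d : nat) : rel (cube_vertex d) :=
  fun x y => #|[set i : 'I_d | x i != y i]| == 1%N.

Definition dist_weight (V : finType) (adj : rel V) (A : zmodType) (f : V -> A) (x : V) : A :=
  \sum_(y : V | adj x y) f y.

Definition distance_antimagic_labelling (V : finType) (adj : rel V) (A : zmodType)
  (f : V -> A) : Prop :=
  bijective f /\ injective (dist_weight adj f).

Definition distance_antimagic (V : finType) (adj : rel V) (A : zmodType) : Prop :=
  exists f : V -> A, distance_antimagic_labelling adj f.

(* Main.v *)
Require Import Defs.
From HB Require Import structures.
From mathcomp Require Import all_boot all_order all_algebra.
From mathcomp Require Import zify.
Import GRing.Theory.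

Lemma binsum_rec (g : nat -> bool) n :
  (\sum_(j < n.+1) g j * 2 ^ j = g 0%N + 2 * \sum_(j < n) g j.+1 * 2 ^ j)%N.
Proof.
rewrite big_ord_recl /= expn0 muln1 big_distrr /=; congr (_ + _)%N.
by apply: eq_bigr => j _; rewrite /= expnS mulnCA.
Qed.

Lemma binsum_inj n : forall g g' : nat -> bool,
  (\sum_(j < n) g j * 2 ^ j = \sum_(j < n) g' j * 2 ^ j)%N ->
  forall j, (j < n)%N -> g j = g' j.
Proof.
elim: n => [|n IH] g g' E j lt; first by [].
rewrite !binsum_rec in E.
have h0 : g 0%N = g' 0%N.
  have := congr1 odd E; rewrite !oddD /= !addbF !addbb !addbF.
  by case: (g 0%N); case: (g' 0%N).
case: j lt => [|j] lt; first exact: h0.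
have E' : (\sum_(j < n) g j.+1 * 2 ^ j = \sum_(j < n) g' j.+1 * 2 ^ j)%N.
  rewrite h0 in E; lia.
exact: (IH (fun j => g j.+1) (fun j => g' j.+1) E').
Qed.

Lemma binsum_lt n : forall g : nat -> bool,
  (\sum_(j < n) g j * 2 ^ j < 2 ^ n)%N.
Proof.
elim: n => [|n IH] g; first by rewrite big_ord0.
rewrite binsum_rec expnS; have := IH (fun j => g j.+1).
move=> /= h; move: h; generalize (2 ^ n)%N (\sum_(j < n) g j.+1 * 2 ^ j)%N; case: (g 0%N) => /=; lia.
Qed.

Lemma pow2sum n : (\sum_(j < n) 2 ^ j).+1 = 2 ^ n.
Proof.
elim: n => [|n IH]; first by rewrite big_ord0.
rewrite big_ord_recr /= expnS -IH; set S := bigop _ _ _; lia.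
Qed.

Section Cube.
Variable d : nat.

Definition gof (x : cube_vertex d) (n : nat) : bool :=
  if @insub nat (fun n => n < d)%N _ n is Some i then x i else false.

Lemma gofE x (i : 'I_d) : gof x i = x i.
Proof. by rewrite /gof valK. Qed.

Definition enc (x : cube_vertex d) : nat := (\sum_(i < d) x i * 2 ^ i)%N.

Lemma enc_gof x : enc x = (\sum_(i < d) gof x i * 2 ^ i)%N.
Proof. by apply: eq_bigr => i _; rewrite gofE. Qed.

Lemma enc_inj : injective enc.
Proof.
move=> x y E; apply/ffunP => i; rewrite -!gofE.
apply: (@binsum_inj d (gof x) (gof y) _ i (ltn_ord i)).
by rewrite -!enc_gof.
Qed.

Lemma enc_lt x : (enc x < 2 ^ d)%N.
Proof. rewrite enc_gof; exact: binsum_lt. Qed.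

Definition flip (x : cube_vertex d) (i : 'I_d) : cube_vertex d :=
  [ffun j => if j == i then ~~ x j else x j].

Lemma flip_inj x : injective (flip x).
Proof.
move=> i j /ffunP /(_ i); rewrite !ffunE eqxx.
by case: eqVneq => // _; case: (x i).
Qed.

Lemma flipK i : involutive (flip ^~ i).
Proof.
by move=> x; apply/ffunP => j; rewrite !ffunE; case: eqVneq => //; rewrite negbK.
Qed.

Lemma adj_flip x y : cube_adj x y = (y \in [set flip x i | i : 'I_d]).
Proof.
apply/idP/imsetP.
  move=> /cards1P [i Hi]; exists i => //; apply/ffunP => j.
  move/setP/(_ j): Hi; rewrite !inE ffunE /=.
  case: (eqVneq j i) => [->|_] /=; first by case: (x i); case: (y i).
  by move/negbFE/eqP.
move=> [i _ ->]; rewrite /cube_adj; apply/cards1P; exists i.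
apply/setP => j; rewrite !inE ffunE; case: (eqVneq j i) => _ /=; [by case: (x j) | by rewrite eqxx].
Qed.

Local Open Scope ring_scope.
Lemma weight_flip (A : zmodType) (f : cube_vertex d -> A) x :
  dist_weight (@cube_adj d) f x = \sum_(i < d) f (flip x i).
Proof.
rewrite /dist_weight (eq_bigl (mem [set flip x i | i : 'I_d])).
  by rewrite big_imset //= => i j _ _; apply: flip_inj.
by move=> y; rewrite adj_flip.
Qed.

Lemma enc_flip x i : (enc (flip x i) + 2 * (x i * 2 ^ i) = enc x + 2 ^ i)%N.
Proof.
rewrite /enc (bigD1 i) //= [X in (_ = X + _)%N](bigD1 i) //= ffunE eqxx.
rewrite (eq_bigr (fun j => x j * 2 ^ j)%N); last first.
  by move=> j /negPf ji; rewrite ffunE ji.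
set S := bigop _ _ _; case: (x i) => /=; lia.
Qed.

End Cube.
Arguments enc {d} x.
Arguments flip {d} x i.
Arguments enc_lt {d} x.
Arguments enc_inj {d} [x1 x2].
Arguments enc_flip {d} x i.
Arguments weight_flip {d A} f x.
Arguments flipK {d} i x.
Local Open Scope ring_scope.

Lemma main_aux (d : nat) (hd : (1 <= d)%N) :
  distance_antimagic (@cube_adj d) 'Z_(expn 2 d) <-> odd d.
Proof.
have m1 : (1 < 2 ^ d)%N by rewrite -{1}(expn0 2) ltn_exp2l.
have cardZ : #|'Z_(expn 2 d)| = (2 ^ d)%N by rewrite card_ord Zp_cast.
have cardV : #|cube_vertex d| = (2 ^ d)%N by rewrite card_ffun card_bool card_ord.
have z0 : ((2 ^ d)%:R : 'Z_(expn 2 d)) = 0 by rewrite -Zp_nat_mod // modnn.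
split.
- move=> [f [fbij winj]].
  apply/negPn/negP => ev.
  have wbij : bijective (dist_weight (@cube_adj d) f).
    by apply: inj_card_bij => //; rewrite card_ord Zp_cast // cardV.
  set S := \sum_(a : 'Z_(expn 2 d)) a.
  have Sf : \sum_x f x = S by rewrite /S (reindex f) //; apply: onW_bij.
  have Sw : \sum_x dist_weight (@cube_adj d) f x = S.
    by rewrite /S (reindex _ (onW_bij _ wbij)).
  have SS : S = S *+ d.
    rewrite -[LHS]Sw -Sf (eq_bigr _ (fun x _ => weight_flip f x)) exchange_big /=.
    rewrite (eq_bigr (fun _ => \sum_x f x)); last first.
      by move=> i _; rewrite [RHS](reindex_inj (inv_inj (flipK i))).
    by rewrite sumr_const card_ord.
  have SC : S = ('C(2 ^ d, 2))%:R.
    rewrite /S (eq_bigr (fun a => (val a)%:R)); last by move=> a _; rewrite natr_Zp.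
    rewrite -natr_sum; congr (_%:R).
    by rewrite -[in RHS](Zp_cast m1) -bin2_sum big_mkord.
  have := congr1 val SS; rewrite SC -mulrnA /= !val_Zp_nat //; clear -hd ev.
  rewrite bin2 -(prednK hd) expnS; set t := (2 ^ d.-1)%N.
  have tpos : (0 < t)%N by rewrite expn_gt0.
  have -> : ((2 * t * (2 * t).-1)./2 = t * (2 * t).-1)%N.
    by rewrite -mulnA mul2n doubleK.
  have [j dj] : exists j, (d.-1.+1 = 2 * j)%N.
    exists (d.-1.+1)./2; rewrite prednK // mul2n.
    by rewrite -[in LHS](odd_double_half d) (negbTE ev).
  rewrite dj.
  have -> : (t * (2 * t).-1 * (2 * j) = (j * (2 * t).-1) * (2 * t))%N by lia.
  rewrite modnMl.
  have -> : (t * (2 * t).-1 = (t.-1) * (2 * t) + t)%N by nia.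
  rewrite modnMDl modn_small; first by move=> t0; rewrite t0 in tpos.
  lia.
- move=> od.
  pose f := fun x : cube_vertex d => ((enc x)%:R : 'Z_(expn 2 d)).
  have finj : injective f.
    move=> x y /(congr1 val) /=; rewrite !val_Zp_nat // !modn_small ?enc_lt //.
    exact: enc_inj.
  exists f; split; first by apply: inj_card_bij => //; rewrite card_ord Zp_cast // cardV.
  have sum2 : \sum_(i < d) ((2 ^ i)%N)%:R = -1 :> 'Z_(expn 2 d).
    by rewrite -natr_sum; apply/eqP; rewrite -addr_eq0 natr1 pow2sum z0.
  have key x : dist_weight (@cube_adj d) f x + 2%:R * f x = d%:R * f x - 1.
    rewrite weight_flip.
    have E : \sum_(i < d) (f (flip x i) + 2%:R * ((x i * 2 ^ i)%N)%:R)
           = \sum_(i < d) (f x + ((2 ^ i)%N)%:R).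
      by apply: eq_bigr => i _; rewrite /f -natrM -!natrD enc_flip.
    rewrite !big_split /= sumr_const card_ord sum2 -mulr_sumr -!natr_sum in E.
    by rewrite /f -[X in X + _]natr_sum E mulr_natl.
  have key2 x : (d%:R - 2%:R) * f x = dist_weight (@cube_adj d) f x + 1.
    rewrite mulrBl; apply: (addIr (2%:R * f x)).
    by rewrite subrK addrAC key subrK.
  have u_unit : (d%:R - 2%:R : 'Z_(expn 2 d)) \is a GRing.unit.
    have le2 : (2 <= d + 2 ^ d)%N by rewrite (leq_trans m1) // leq_addl.
    have -> : (d%:R - 2%:R : 'Z_(expn 2 d)) = ((d + 2 ^ d - 2)%N)%:R.
      by rewrite natrB // natrD z0 addr0.
    rewrite unitZpE // coprime_pexpl // coprime2n oddB // oddD oddX.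
    by rewrite od /= orbF addbF -lt0n.
  move=> x y Wxy; apply: finj; apply: (mulrI u_unit).
  by rewrite !key2 Wxy.
Qed.

Local Close Scope ring_scope.

Theorem mainTheorem4 (d : nat) (hd : (1 <= d)%N) :
  distance_antimagic (@cube_adj d) 'Z_(2 ^ d) <-> odd d.
Proof. exact: main_aux. Qed.
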